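(* Let $\beta\in\mathbb R$ with $|\beta|<\frac\pi4$, let $a_0,a_1,a_2,a_3$ be given by $a_0=\frac{1+\sqrt2\cos\beta}{2\sqrt2}$, $a_1=\frac{1+\sqrt2\sin\beta}{2\sqrt2}$, $a_2=\frac{1-\sqrt2\cos\beta}{2\sqrt2}$, $a_3=\frac{1-\sqrt2\sin\beta}{2\sqrt2}$, and let $\mu_0$ be the associated measure. If $\mu_0$ is absolutely continuous with respect to Lebesgue measure on $[0,1]$, then its Radon–Nikodym derivative $f=d\mu_0/dx$ is not essentially bounded on any non-empty open subset of $[0,1]$.
   Context: $L^2(\mathbb T)$ with normalized Haar measure, $\langle f\mid g\rangle=\int\overline fg$, $e_n(z)=z^n$. $m_0(z)=a_0+a_1z+a_2z^2+a_3z^3$, $m_1(z)=z^3\overline{m_0(-z)}$, $(S_if)(z)=m_i(z)f(z^2)$ for $i=0,1$. $\mu_0$ is the Borel probability measure on $[0,1]$ determined by $\mu_0([\xi,\xi+2^{-k}))=\|S_{i_k}^*\cdots S_{i_1}^*e_0\|^2$ for every $\xi=\sum_{r=1}^ki_r2^{-r}$, $i_r\in\{0,1\}$. *)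

(* Defs.v *)
From HB Require Import structures.
From mathcomp Require Import all_boot all_order all_algebra.
From mathcomp Require Import all_classical all_reals all_analysis.
Set Implicit Arguments. Unset Strict Implicit. Unset Printing Implicit Defensive.
Import Order.TTheory GRing.Theory Num.Theory.
Import numFieldNormedType.Exports.
Local Open Scope classical_set_scope.
Local Open Scope ring_scope.

Section Defs.
Variable R : realType.

Definition acoef (beta : R) (k : nat) : R :=
  let s2 := Num.sqrt 2 in
  match k with
  | 0%N => (1 + s2 * cos beta) / (2 * s2)
  | 1%N => (1 + s2 * sin beta) / (2 * s2)
  | 2%N => (1 - s2 * cos beta) / (2 * s2)
  | 3%N => (1 - s2 * sin beta) / (2 * s2)
  | _ => 0
  end.

(* Fourier coefficients of m_0(z) = a0 + a1 z + a2 z^2 + a3 z^3 and of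
   m_1(z) = z^3 conj(m_0(-z)) = sum_k a_k (-1)^k z^(3-k)  (a_k real, |z| = 1);
   both are supported in {0,1,2,3}. *)
Definition mcoef (beta : R) (i : bool) (n : nat) : R :=
  if i then (if (n <= 3)%N then (-1) ^+ (3 - n) * acoef beta (3 - n) else 0)
  else acoef beta n.

(* Elements of L^2(T) are identified with their Fourier coefficient
   sequences  int -> R  (all vectors occurring here have real coefficients).
   (S_i f)(z) = m_i(z) f(z^2) has coefficients (S_i f)_n = sum_k m_i[k] f_{(n-k)/2},
   hence its adjoint is (S_i^* g)_j = sum_k conj(m_i[k]) g_{2j+k}. *)
Definition Sadj (beta : R) (i : bool) (g : int -> R) : int -> R :=
  fun j => \sum_(k < 4) mcoef beta i k * g (2 * j + k%:Z)%R.

Definition e0 : int -> R := fun n => if n == 0 then 1 else 0.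

(* S_{i_k}^* ... S_{i_1}^* e_0  for the word s = [:: i_1; ...; i_k] *)
Definition Svec (beta : R) (s : seq bool) : int -> R :=
  foldl (fun g b => Sadj beta b g) e0 s.

Definition l2norm2 (g : int -> R) : \bar R :=
  \esum_(n in [set: int]) ((g n) ^+ 2)%:E.

Definition dyadic (s : seq bool) : R :=
  \sum_(r < size s) (nth false s r)%:R / 2 ^+ r.+1.

End Defs.

(* Main.v *)
Require Import Defs.
From HB Require Import structures.
From mathcomp Require Import all_boot all_order all_algebra.
From mathcomp Require Import all_classical all_reals all_analysis.
From mathcomp Require Import ring lra zify.
Import Order.TTheory GRing.Theory Num.Theory.
Import numFieldNormedType.Exports.
Local Open Scope classical_set_scope.
Local Open Scope ring_scope.

Lemma cos_big (R : realType) (beta : R) : `|beta| < pi / 4 ->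
  0 < cos beta /\ 1 < 2 * cos beta ^+ 2.
Proof.
move=> hb.
have pi0 : 0 < pi :> R := pi_gt0 R.
set c4 := cos (pi / 4 : R).
have c4pos : 0 < c4.
  apply: cos_gt0_pihalf; apply/andP; split; lra.
have hc4 : 2 * c4 ^+ 2 = 1.
  have := cosD (pi / 4) (pi / 4 : R).
  have -> : pi / 4 + pi / 4 = pi / 2 :> R by field.
  rewrite cos_pihalf -/c4 => h.
  have := cos2Dsin2 (pi / 4 : R). rewrite -/c4. nra.
have hcb : c4 < cos beta.
  have -> : cos beta = cos `|beta|.
    by case: (lerP 0 beta) => hb0; [rewrite ger0_norm | rewrite ltr0_norm // cosN].
  have := normr_ge0 beta => nb.
  rewrite ltr_cos //; rewrite in_itv /=; apply/andP; split; lra.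
split; nra.
Qed.

Definition supp0 {R : realType} (g : int -> R) := forall n : int, (0 < n)%R -> g n = 0.

Lemma Sadj_supp (R : realType) (beta : R) b (g : int -> R) : supp0 g -> supp0 (Sadj beta b g).
Proof.
move=> hg j hj; rewrite /Sadj big1 // => k _; rewrite hg ?mulr0 //.
have : (0 <= k%:Z)%R by [].
lia.
Qed.

Lemma Sadj_at0 (R : realType) (beta : R) b (g : int -> R) : supp0 g ->
  Sadj beta b g 0 = mcoef beta b 0 * g 0.
Proof.
move=> hg; rewrite /Sadj big_ord_recl /= mulr0 add0r big1 ?addr0 // => i _.
rewrite hg ?mulr0 //= mulr0 add0r.
Qed.

Lemma foldl_supp (R : realType) (beta : R) s (g : int -> R) : supp0 g ->
  supp0 (foldl (fun g b => Sadj beta b g) g s).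
Proof.
elim: s g => [|b s IH] g hg //=; apply: IH; exact: Sadj_supp.
Qed.

Lemma e0_supp (R : realType) : supp0 (@e0 R).
Proof. by move=> n hn; rewrite /e0 gt_eqF. Qed.

Lemma foldl_nz (R : realType) (beta : R) s (g : int -> R) : supp0 g ->
  acoef beta 0 != 0 -> acoef beta 3 != 0 -> g 0 != 0 ->
  foldl (fun g b => Sadj beta b g) g s 0 != 0.
Proof.
move=> + h0 h3.
elim: s g => [|b s IH] g hg hg0 //=; apply: IH; first exact: Sadj_supp.
rewrite Sadj_at0 // mulf_neq0 //.
case: b => //; rewrite /mcoef subn0 mulf_neq0 // expf_neq0 // oppr_eq0 oner_eq0.
Qed.

Lemma foldl_zeros (R : realType) (beta : R) k (g : int -> R) : supp0 g ->
  foldl (fun g b => Sadj beta b g) g (nseq k false) 0 = acoef beta 0 ^+ k * g 0.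
Proof.
elim: k g => [|k IH] g hg /=; first by rewrite mul1r.
rewrite IH; last exact: Sadj_supp.
by rewrite Sadj_at0 // /mcoef exprS mulrA [_ ^+ k * _]mulrC.
Qed.

Lemma l2_ge (R : realType) (g : int -> R) : ((g 0 ^+ 2)%:E <= l2norm2 g)%E.
Proof.
rewrite /l2norm2; apply: esum_ge; exists [set 0].
  by split => //; exact: finite_set1.
by rewrite fsbig_set1.
Qed.

Lemma dyadic_zeros (R : realType) s k : dyadic R (s ++ nseq k false) = dyadic R s.
Proof.
rewrite /dyadic size_cat size_nseq big_split_ord /=.
rewrite [X in _ + X]big1 ?addr0.
  by apply: eq_bigr => i _; rewrite nth_cat /= ltn_ord.
move=> i _; rewrite nth_cat /= ltnNge leq_addr /= addKn nth_nseq.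
by case: ifP; rewrite mul0r.
Qed.

Lemma dyadic_rcons (R : realType) s b :
  dyadic R (rcons s b) = dyadic R s + b%:R / 2 ^+ (size s).+1.
Proof.
rewrite /dyadic size_rcons big_ord_recr /= nth_rcons ltnn eqxx; congr (_ + _).
by apply: eq_bigr => i _; rewrite nth_rcons ltn_ord.
Qed.

Lemma dyadic_exists (R : realType) n m : (m < 2 ^ n)%N ->
  exists s, size s = n /\ dyadic R s = m%:R / 2 ^+ n.
Proof.
elim: n m => [|n IH] m hm.
  exists [::]; split => //; rewrite /dyadic big_ord0.
  by move: hm; rewrite expn0 ltnS leqn0 => /eqP ->; rewrite mul0r.
have hm' : (m./2 < 2 ^ n)%N.
  move: hm; rewrite expnS -divn2; lia.
have [s [hs hd]] := IH _ hm'.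
exists (rcons s (odd m)); split; first by rewrite size_rcons hs.
rewrite dyadic_rcons hd hs.
have hmm : m%:R = (odd m)%:R + 2 * (m./2)%:R :> R.
  by rewrite -[in LHS](odd_double_half m) natrD -muln2 natrM mulrC.
rewrite hmm exprS; field; exact: expf_neq0.
Qed.

Lemma bernoulli_ge (R : realType) (q : R) k : 1 <= q -> 1 + k%:R * (q - 1) <= q ^+ k.
Proof.
move=> hq; elim: k => [|k IH]; first by rewrite mul0r addr0 expr0.
rewrite exprS -natr1.
have k0 : 0 <= k%:R :> R by rewrite ler0n.
have h1 : 0 <= k%:R * (q - 1) * (q - 1) :> R by rewrite mulr_ge0 // ?mulr_ge0 // subr_ge0.
nra.
Qed.


Theorem corollary3p13 (R : realType) (beta : R)
    (mu : {measure set R -> \bar R}) (f : R -> R) :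
  `|beta| < pi / 4 ->
  mu setT = 1%E -> mu `[0%R, 1%R]%classic = 1%E ->
  (forall s : seq bool,
      mu `[dyadic R s, dyadic R s + (2 ^+ size s)^-1[%classic = l2norm2 (Svec beta s)) ->
  measurable_fun setT f -> (forall x, 0 <= f x) ->
  (forall A : set R, measurable A -> A `<=` `[0%R, 1%R]%classic ->
      mu A = (\int[lebesgue_measure]_(x in A) (f x)%:E)%E) ->
  forall U : set R, open U -> U `&` `[0%R, 1%R]%classic !=set0 ->
  ~ (exists M : R,
       {ae lebesgue_measure, forall x, (U `&` `[0%R, 1%R]%classic) x -> `|f x| <= M}).
Proof.
move=> hb _ _ hdy mf f0 hac U oU [x [Ux x01]] [M hM].
have [cpos c2] := cos_big _ _ hb.
set a0 := acoef beta 0.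
have s2pos : (0 < Num.sqrt 2 :> R)%R by rewrite sqrtr_gt0.
have s2sq : (Num.sqrt 2 ^+ 2 = 2 :> R)%R by rewrite sqr_sqrtr.
have a0pos : (0 < a0)%R.
  rewrite /a0 /acoef divr_gt0 //; nra.
have qgt : (1 < 2 * a0 ^+ 2)%R.
  have -> : (2 * a0 ^+ 2 = (1 + Num.sqrt 2 * cos beta) ^+ 2 / 4)%R.
    by rewrite /a0 /acoef /= expr_div_n exprMn s2sq; field.
  have ht : ((Num.sqrt 2 * cos beta) ^+ 2 = 2 * cos beta ^+ 2 :> R)%R by rewrite exprMn s2sq.
  have tpos : (0 < Num.sqrt 2 * cos beta :> R)%R by rewrite mulr_gt0.
  nra.
have a3nz : acoef beta 3 != 0.
  rewrite /acoef /=; apply: mulf_neq0; last by rewrite invr_eq0 mulf_neq0 // gt_eqF.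
  have ht : ((Num.sqrt 2 * sin beta) ^+ 2 = 2 * sin beta ^+ 2 :> R)%R by rewrite exprMn s2sq.
  have := sin2cos2 beta => hs.
  apply/eqP => h.
  have h1 : (Num.sqrt 2 * sin beta = 1 :> R)%R by lra.
  rewrite h1 in ht. nra.
case/nbhs_ballP: (oU x Ux) => e epos he.
set n := (Num.truncn e^-1).+1.
set P : R := 2 ^+ n.
set d : R := P^-1.
have Ppos : (0 < P)%R by rewrite exprn_gt0.
have dpos : (0 < d)%R by rewrite invr_gt0.
have dP : (d * P = 1)%R by rewrite mulVf // gt_eqF.
have natP : ((2 ^ n)%:R = P)%R by rewrite natrX.
have hde : (d < e)%R.
  have h1 : (e^-1 < n%:R)%R by rewrite truncnS_gt.
  have h2 : (n%:R <= P)%R by rewrite -natP ler_nat ltnW // ltn_expl.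
  rewrite /d invf_plt ?posrE //; lra.
have x0 : (0 <= x)%R by move: x01; rewrite /= in_itv /= => /andP[].
have x1 : (x <= 1)%R by move: x01; rewrite /= in_itv /= => /andP[].
have p2 : (0 < 2 ^ n)%N by rewrite expn_gt0.
set m := minn (Num.truncn (x * P)) (2 ^ n).-1.
have hm : (m < 2 ^ n)%N by rewrite /m; lia.
have hmx : (m%:R <= x * P /\ x * P <= m%:R + 1)%R.
  have xP0 : (0 <= x * P)%R by rewrite mulr_ge0 // ltW.
  case: (leqP (Num.truncn (x * P)) (2 ^ n).-1) => h.
    rewrite /m (minn_idPl h); split; first by rewrite truncn_le.
    by rewrite natr1 ltW // truncnS_gt.
  rewrite /m (minn_idPr (ltnW h)); split.
    by rewrite -truncn_ge_nat // ltnW.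
  by rewrite natr1 prednK // natP; nra.
have [s [hs hd]] := dyadic_exists R n m hm.
set c := Svec beta s 0.
have cnz : c != 0.
  rewrite /c /Svec; apply: foldl_nz; [exact: e0_supp | by rewrite gt_eqF | exact: a3nz | ].
  by rewrite /Defs.e0 eqxx oner_eq0.
have claim : forall k, ((a0 ^+ k * c) ^+ 2 <= `|M| * (d * (2 ^+ k)^-1))%R.
  move=> k.
  set sk := s ++ nseq k false.
  set xi : R := (m%:R / P)%R.
  set dk : R := (d * (2 ^+ k)^-1)%R.
  have dkpos : (0 < dk)%R by rewrite mulr_gt0 // invr_gt0 exprn_gt0.
  have dkd : (dk <= d)%R.
    have hk1 : (1 <= 2 ^+ k :> R)%R by apply: exprn_ege1; rewrite ler1n.
    have hk2 : ((2 ^+ k)^-1 <= 1 :> R)%R by rewrite invf_le1 // exprn_gt0.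
    have hk3 : (0 <= (2 ^+ k)^-1 :> R)%R by rewrite invr_ge0 exprn_ge0.
    rewrite /dk; nra.
  have hI : mu `[xi, xi + dk[%classic = l2norm2 (Svec beta sk).
    have := hdy sk; rewrite /sk dyadic_zeros size_cat size_nseq hs hd.
    by rewrite exprD invfM.
  have hsv : Svec beta sk 0 = (a0 ^+ k * c)%R.
    by rewrite /Svec /sk foldl_cat foldl_zeros //; apply: foldl_supp; exact: e0_supp.
  have sub : `[xi, xi + dk[%classic `<=` U `&` `[0%R, 1%R]%classic.
    move=> y; rewrite /= in_itv /= => /andP[y1 y2].
    have xid : (xi = m%:R * d)%R by [].
    have hmP : ((m.+1)%:R <= P)%R by rewrite -natP ler_nat.
    split.
      apply: he; rewrite /ball /=.
      rewrite ltr_norml; apply/andP; split; nra.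
    rewrite /= in_itv /=; apply/andP; split.
      have : (0 <= m%:R * d)%R by rewrite mulr_ge0 // ltW.
      lra.
    rewrite -natr1 in hmP; nra.
  set I : set R := `[xi, xi + dk[%classic.
  have lower : (((a0 ^+ k * c) ^+ 2)%:E <= mu I)%E.
    by rewrite hI -hsv; apply: l2_ge.
  have upper : (mu I <= (`|M| * dk)%:E)%E.
    rewrite hac //; last (by move=> y /sub []); last exact: measurable_itv.
    apply: (@le_trans _ _ (\int[lebesgue_measure]_(y in I) (cst (`|M|%:E)) y)%E).
      apply: ae_ge0_le_integral => //.
      all: try (by move=> y _; rewrite lee_fin).
      - exact: measurable_itv.
      - apply/measurable_realfun.measurable_EFinP.
        exact: (measurable_funS measurableT (@subsetT _ _) mf).
      - case: hM => N [mN N0 hN]; exists N; split => // y /= hy; apply: hN => /= hy'.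
        apply: hy => Iy.
        have := hy' (sub y Iy).
        have := ler_norm (f y). have := ler_norm M.
        rewrite lee_fin. lra.
    rewrite integral_cst; last exact: measurable_itv.
    have hL : (lebesgue_measure I = dk%:E)%E.
      rewrite /I lebesgue_measure_itv /= lte_fin ltrDl dkpos.
      by rewrite -EFinD addrAC subrr add0r.
    rewrite EFinM; apply: lee_wpmul2l; first by rewrite lee_fin.
    have h := lexx (dk%:E)%E; rewrite -{1}hL in h; exact: h.
  by move: (le_trans lower upper); rewrite lee_fin.
set q := (2 * a0 ^+ 2)%R.
have c2pos : (0 < c ^+ 2)%R by rewrite lt_def sqr_ge0 sqrf_eq0 cnz.
have hkey : forall k, (q ^+ k * c ^+ 2 <= `|M| * d)%R.
  move=> k; have := claim k.
  have e1 : (q ^+ k * c ^+ 2 = 2 ^+ k * (a0 ^+ k * c) ^+ 2)%R.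
    by rewrite /q exprMn exprMn; ring.
  have k0 : (2 ^+ k != 0 :> R)%R by rewrite expf_neq0.
  have e2 : (2 ^+ k * (`|M| * (d / 2 ^+ k)) = `|M| * d)%R by field.
  by rewrite e1 -e2 => h; rewrite ler_pM2l // exprn_gt0.
set A := ((q - 1) * c ^+ 2)%R.
have Apos : (0 < A)%R by rewrite mulr_gt0 // subr_gt0.
set K := (`|M| * d / A)%R.
set k := (Num.truncn K).+1.
have hK : (K < k%:R)%R by rewrite truncnS_gt.
have hA : (K * A = `|M| * d)%R by rewrite /K mulfVK // gt_eqF.
have h2 : (K * A < k%:R * A)%R by rewrite ltr_pM2r.
have h1 : ((1 + k%:R * (q - 1)) * c ^+ 2 <= q ^+ k * c ^+ 2)%R.
  by rewrite ler_pM2r // bernoulli_ge // ltW.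
have e3 : ((1 + k%:R * (q - 1)) * c ^+ 2 = c ^+ 2 + k%:R * A)%R by rewrite /A; ring.
have := hkey k.
lra.
Qed.
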